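(* Let $G$ be a triangle-free graph on $n$ vertices with at least one edge. Then $\chi_f(\overline{G})\ge\vartheta(G)\ge\frac1{16}\,n^{2/3}$.
   Context: $\overline{G}$ is the complement. $\chi_f(H)$ is the fractional chromatic number: the minimum of $\sum_I x_I$ over nonnegative weights on independent sets $I$ of $H$ with $\sum_{I\ni v}x_I\ge1$ for every vertex $v$. $\vartheta(G)$ is the Lovász theta function: the maximum of $\mathrm{Tr}(BJ)$ over positive semidefinite $B$ indexed by $V(G)$ with $\mathrm{Tr}B=1$ and $B_{i,j}=0$ for $\{i,j\}\in E(G)$, $J$ the all-ones matrix. *)

(* Defs.v *)
From HB Require Import structures.
From mathcomp Require Import all_boot all_order all_algebra.
From mathcomp Require Import all_classical all_reals all_analysis.
Set Implicit Arguments. Unset Strict Implicit. Unset Printing Implicit Defensive.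
Import Order.TTheory GRing.Theory Num.Theory.
Local Open Scope ring_scope.
Local Open Scope classical_set_scope.

Definition simple_graph (n : nat) (e : rel 'I_n) : Prop :=
  irreflexive e /\ symmetric e.

Definition triangle_free (n : nat) (e : rel 'I_n) : Prop :=
  forall x y z : 'I_n, ~ [&& e x y, e y z & e x z].

Definition has_edge (n : nat) (e : rel 'I_n) : Prop := exists x y, e x y.

Definition compl_graph (n : nat) (e : rel 'I_n) : rel 'I_n :=
  fun x y => (x != y) && ~~ e x y.

Definition independent (n : nat) (e : rel 'I_n) (I : {set 'I_n}) : bool :=
  [forall x in I, forall y in I, ~~ e x y].

Definition frac_colouring (R : realType) (n : nat) (e : rel 'I_n)
  (x : {ffun {set 'I_n} -> R}) : Prop :=
  (forall I, 0 <= x I) /\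
  (forall I, ~~ independent e I -> x I = 0) /\
  (forall v : 'I_n, 1 <= \sum_(I | independent e I && (v \in I)) x I).

Definition frac_chromatic (R : realType) (n : nat) (e : rel 'I_n) : R :=
  inf [set s : R | exists x, frac_colouring e x /\
                     s = \sum_(I | independent e I) x I].

Definition psd (R : realType) (n : nat) (B : 'M[R]_n) : Prop :=
  B^T = B /\ forall v : 'cV[R]_n, 0 <= (v^T *m B *m v) ord0 ord0.

Definition theta_feasible (R : realType) (n : nat) (e : rel 'I_n)
  (B : 'M[R]_n) : Prop :=
  psd B /\ \tr B = 1 /\ (forall i j, e i j -> B i j = 0).

Definition lovasz_theta (R : realType) (n : nat) (e : rel 'I_n) : R :=
  sup [set t : R | exists B, theta_feasible e B /\
                     t = \tr (B *m const_mx 1)].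

(* Main.v *)
Require Import Defs.
From HB Require Import structures.
From mathcomp Require Import all_boot all_order all_algebra.
From mathcomp Require Import all_classical all_reals all_analysis.
From mathcomp Require Import ring lra.
Import Order.TTheory GRing.Theory Num.Theory.
Local Open Scope ring_scope.

Definition qf {R : realType} {n : nat} (B : 'M[R]_n) (f : 'I_n -> R) : R :=
  \sum_i \sum_j f i * B i j * f j.

Lemma psd_qf {R : realType} {n : nat} (B : 'M[R]_n) (f : 'I_n -> R) :
  psd B -> 0 <= qf B f.
Proof.
move=> [_ H]; have := H (\col_i f i).
rewrite !mxE /qf.
under eq_bigr => j _ do rewrite !mxE.
under eq_bigr => j _ do (under eq_bigr => i _ do rewrite !mxE).
under eq_bigr => j _ do rewrite mulr_suml.
rewrite exchange_big /=.
by [].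
Qed.

Lemma sum_delta {R : realType} {n : nat} (i : 'I_n) (F : 'I_n -> R) :
  \sum_k ((k == i)%:R * F k) = F i.
Proof.
rewrite (bigD1 i) //= eqxx mul1r big1 ?addr0 // => k /negbTE ->.
by rewrite mul0r.
Qed.

Lemma sumJ {R : realType} {n : nat} (B : 'M[R]_n) :
  \tr (B *m const_mx 1) = \sum_i \sum_j B i j.
Proof.
rewrite /mxtrace; apply: eq_bigr => i _; rewrite !mxE.
by apply: eq_bigr => j _; rewrite mxE mulr1.
Qed.

Lemma psd_gram {R : realType} {n m : nat} (F : 'M[R]_(m, n)) (g : 'cV[R]_n)
  (c d : R) : 0 <= c -> 0 <= d -> psd (c *: (F^T *m F) + d *: (g *m g^T)).
Proof.
move=> c0 d0; split.
  by rewrite linearD /= !linearZ /= !trmx_mul !trmxK.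
move=> v.
rewrite mulmxDr mulmxDl -!scalemxAr -!scalemxAl !mxE.
have sq (w : 'cV[R]_(m)) : 0 <= (w^T *m w) ord0 ord0.
  rewrite mxE; apply: sumr_ge0 => k _; rewrite mxE -expr2; exact: sqr_ge0.
have sq1 (w : 'cV[R]_(1)) : 0 <= (w^T *m w) ord0 ord0.
  rewrite mxE; apply: sumr_ge0 => k _; rewrite mxE -expr2; exact: sqr_ge0.
apply: addr_ge0; apply: mulr_ge0 => //.
  by have := sq (F *m v); rewrite trmx_mul !mulmxA [X in 0 <= X -> _]mxE.
by have := sq1 (g^T *m v); rewrite trmx_mul trmxK !mulmxA [X in 0 <= X -> _]mxE.
Qed.

Lemma gram_entry {R : realType} {n m : nat} (F : 'M[R]_(m, n)) (g : 'cV[R]_n)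
  (c d : R) i j : (c *: (F^T *m F) + d *: (g *m g^T)) i j =
   c * \sum_k F k i * F k j + d * (g i ord0 * g j ord0).
Proof.
rewrite !mxE; congr (_ * _ + _ * _).
  by apply: eq_bigr => k _; rewrite mxE.
by rewrite big_ord1 mxE.
Qed.

Lemma b2sq {R : realType} (b : bool) : (b%:R : R) * b%:R = b%:R.
Proof. by case: b; rewrite ?mulr1 ?mulr0. Qed.

Lemma weak_dual {R : realType} {n : nat} (e : rel 'I_n) (i0 : 'I_n)
  (B : 'M[R]_n) (x : {ffun {set 'I_n} -> R}) :
  theta_feasible e B -> frac_colouring (compl_graph e) x ->
  \sum_i \sum_j B i j <= \sum_(I | independent (compl_graph e) I) x I.
Proof.
move=> [Bpsd [Btr Be]] [x0 [xind xcov]].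
set S := \sum_i \sum_j B i j.
set k := \sum_I x I.
have -> : \sum_(I | independent (compl_graph e) I) x I = k.
  rewrite big_mkcond; apply: eq_bigr => I _; case: ifP => // /negbT /xind.
  by move=> ->.
pose y i := \sum_I x I * (i \in I)%:R.
have yE i : y i = \sum_(I | independent (compl_graph e) I && (i \in I)) x I.
  rewrite big_mkcond; apply: eq_bigr => I _.
  case: (boolP (independent _ I)) => hI /=; case: (i \in I) => /=;
    rewrite ?mulr1 ?mulr0 //.
  exact: xind.
have y1 i : 1 <= y i by rewrite yE; exact: xcov.
have y0 i : 0 < y i by apply: lt_le_trans (y1 i).
have k1 : 1 <= k.
  apply: le_trans (y1 i0) _; apply: ler_sum => I _.
  by case: (i0 \in I); rewrite ?mulr1 ?mulr0.
have k0 : 0 < k by apply: lt_le_trans k1.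
pose c := k^-1.
pose a (I : {set 'I_n}) i := (i \in I)%:R / y i.
have xa i : \sum_I x I * a I i = 1.
  rewrite /a /=; under eq_bigr => I _ do rewrite mulrA.
  by rewrite -mulr_suml -/(y i) divff // gt_eqF.
have Bii i : 0 <= B i i.
  have := psd_qf B (fun l => (l == i)%:R) Bpsd; rewrite /qf.
  under eq_bigr => l _ do under eq_bigr => j _ do rewrite -mulrA.
  under eq_bigr => l _ do rewrite -mulr_sumr.
  rewrite sum_delta.
  under eq_bigr => j _ do rewrite mulrC.
  by rewrite sum_delta.
have key : \sum_J x J * qf B (fun i => a J i - c) = \sum_i B i i / y i - c * S.
  transitivity (\sum_J \sum_i \sum_j x J * ((a J i - c) * B i j * (a J j - c))).
    apply: eq_bigr => J _; rewrite /qf mulr_sumr; apply: eq_bigr => i _.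
    by rewrite mulr_sumr.
  rewrite exchange_big /=.
  transitivity (\sum_i \sum_j B i j * (\sum_J x J * a J i * a J j - c)).
    apply: eq_bigr => i _; rewrite exchange_big /=; apply: eq_bigr => j _.
    transitivity (B i j * (\sum_J (x J * a J i * a J j - c * (x J * a J j)
        - c * (x J * a J i) + c * c * x J))).
      by rewrite mulr_sumr; apply: eq_bigr => J _; ring.
    rewrite !big_split /= !sumrN -!mulr_sumr !xa -/k.
    congr (_ * _); rewrite /c; field; exact: lt0r_neq0.
  rewrite /S mulr_sumr -sumrB; apply: eq_bigr => i _.
  under eq_bigr => j _ do rewrite mulrBr [B i j * c]mulrC.
  rewrite sumrB -mulr_sumr; congr (_ - _).
  rewrite (bigD1 i) //= [X in _ + X]big1 ?addr0.
    have E J : x J * a J i * a J i = x J * (i \in J)%:R * ((y i)^-1 * (y i)^-1).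
      by rewrite /a; case: (i \in J); rewrite /=; ring.
    under eq_bigr => J _ do rewrite E.
    rewrite -mulr_suml -/(y i); congr (_ * _).
    by rewrite mulrA divff ?mul1r // gt_eqF.
  move=> j /negbTE ij.
  rewrite mulr_sumr big1 // => J _.
  case: (boolP (independent (compl_graph e) J)) => hJ; last first.
    by rewrite xind // !(mul0r, mulr0).
  rewrite /a /=; case hi: (_ \in _); last by rewrite !(mul0r, mulr0).
  case hj: (_ \in _); last by rewrite !(mul0r, mulr0).
  move: hJ => /forall_inP/(_ i hi)/forall_inP/(_ j hj).
  rewrite /compl_graph eq_sym ij /= negbK => /Be ->.
  by rewrite mul0r.
have H0 : 0 <= \sum_J x J * qf B (fun i => a J i - c).
  by apply: sumr_ge0 => J _; apply: mulr_ge0 => //; exact: psd_qf.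
rewrite key in H0.
have H1 : \sum_i B i i / y i <= 1.
  rewrite -Btr /mxtrace; apply: ler_sum => i _.
  rewrite ler_pdivrMr // ler_peMr //.
have : c * S <= 1 by lra.
by rewrite /c ler_pdivrMl // mulr1.
Qed.

Lemma b2sq' {R : realType} (b : bool) : (b%:R : R) * b%:R = b%:R.
Proof. by case: b; rewrite ?mulr1 ?mulr0. Qed.

Lemma sum_const_ord {R : realType} (n : nat) (c : R) :
  \sum_(i < n) c = n%:R * c.
Proof. by rewrite sumr_const card_ord mulr_natl. Qed.

Lemma tfacts {R : realType} (n : nat) : (0 < n)%N ->
  let t := (n%:R : R) `^ (3^-1) in
  [/\ 1 <= t, t ^+ 3 = n%:R & powR (n%:R : R) (2 / 3) = t ^+ 2].
Proof.
move=> n0 t.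
have t0 : 0 <= t by exact: powR_ge0.
have t3 : t ^+ 3 = n%:R.
  rewrite /t -powR_mulrn ?powR_ge0 // -powRrM mulVf ?pnatr_eq0 //.
  by rewrite powRr1 // ler0n.
have t2 : powR (n%:R : R) (2 / 3) = t ^+ 2.
  by rewrite /t -powR_mulrn ?powR_ge0 // -powRrM mulrC.
split => //.
have n1 : (1 : R) <= n%:R by rewrite ler1n.
rewrite -t3 in n1.
case: (lerP 1 t) => // ht.
have : t ^+ 3 < 1.
  rewrite expr_lt1 //.
by rewrite ltNge n1.
Qed.

Lemma witness_a {R : realType} {n : nat} (e : rel 'I_n) (v : 'I_n) :
  triangle_free e -> 0 < \sum_j (e v j)%:R :> R ->
  exists B : 'M[R]_n, theta_feasible e B /\
    \sum_i \sum_j B i j = \sum_j (e v j)%:R.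
Proof.
move=> tf D0; set D := \sum_j (e v j)%:R in D0 *.
pose u : 'cV[R]_n := \col_i (e v i)%:R.
pose B := 0 *: ((0 : 'M[R]_(1, n))^T *m 0) + D^-1 *: (u *m u^T).
have BE i j : B i j = D^-1 * ((e v i)%:R * (e v j)%:R).
  by rewrite /B gram_entry !mxE mul0r add0r.
exists B; split; last first.
  transitivity (D^-1 * (\sum_i \sum_j (e v i)%:R * (e v j)%:R)).
    rewrite mulr_sumr; apply: eq_bigr => i _; rewrite mulr_sumr.
    by apply: eq_bigr => j _; rewrite BE.
  have -> : \sum_i \sum_j (e v i)%:R * (e v j)%:R = D * D.
    by rewrite /D mulr_suml; apply: eq_bigr => i _; rewrite mulr_sumr.
  field; exact: lt0r_neq0.
split; first by rewrite /B; apply: psd_gram => //; rewrite invr_ge0 ltW.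
split.
  rewrite /mxtrace; under eq_bigr => i _ do rewrite BE b2sq'.
  by rewrite -mulr_sumr mulVf // lt0r_neq0.
move=> i j eij; rewrite BE.
case evi: (e v i); case evj: (e v j); rewrite /= ?(mulr0, mul0r) //.
by exfalso; apply: (tf v i j); rewrite evi eij evj.
Qed.

Lemma witness_b {R : realType} {n : nat} (e : rel 'I_n) (t : R) :
  simple_graph e -> triangle_free e -> (0 < n)%N -> 1 <= t -> t ^+ 3 = n%:R ->
  (forall v, \sum_j (e v j)%:R < t ^+ 2 / 16) ->
  exists B : 'M[R]_n, theta_feasible e B /\
    t ^+ 2 / 16 <= \sum_i \sum_j B i j.
Proof.
move=> [irr sym] tf n0 t1 t3 degb.
pose M : 'M[R]_n := \matrix_(k, i) ((e k i)%:R - t / 2 * (k == i)%:R).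
have Mprod i j : \sum_k M k i * M k j =
    \sum_k (e k i)%:R * (e k j)%:R - t * (e i j)%:R + (t / 2) ^+ 2 * (i == j)%:R.
  transitivity (\sum_k ((e k i)%:R * (e k j)%:R - t / 2 * ((k == i)%:R * (e k j)%:R)
     - t / 2 * ((k == j)%:R * (e k i)%:R) + (t / 2) ^+ 2 * ((k == i)%:R * (k == j)%:R))).
    by apply: eq_bigr => k _; rewrite !mxE; ring.
  rewrite !big_split /= !sumrN -!mulr_sumr !sum_delta (sym j i).
  have -> : t * (e i j)%:R = t / 2 * (e i j)%:R + t / 2 * (e i j)%:R by rewrite -mulrDl -splitr.
  ring.
have t0 : 0 < t by apply: lt_le_trans t1.
have deg0 v : 0 <= \sum_j (e v j)%:R :> R by apply: sumr_ge0 => j _; exact: ler0n.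
pose p i j := \sum_k M k i * M k j + t.
have pii i : p i i = \sum_j (e i j)%:R + (t / 2) ^+ 2 + t.
  rewrite /p Mprod irr eqxx mulr0 subr0 mulr1; congr (_ + _ + _).
  by apply: eq_bigr => k _; rewrite b2sq' sym.
pose trP := \sum_i p i i.
have trP_ge : n%:R * t <= trP.
  rewrite -sum_const_ord; apply: ler_sum => i _; rewrite pii.
  have := deg0 i; have : 0 <= (t / 2) ^+ 2 by exact: sqr_ge0.
  lra.
have trP0 : 0 < trP.
  apply: lt_le_trans trP_ge; apply: mulr_gt0 => //; by rewrite ltr0n.
have trP_le : trP <= n%:R * (t ^+ 2 / 16 + (t / 2) ^+ 2 + t).
  rewrite -sum_const_ord; apply: ler_sum => i _; rewrite pii.
  have := degb i; lra.
pose SP := \sum_i \sum_j p i j.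
have SP_ge : n%:R * (n%:R * t - t * (t ^+ 2 / 16)) <= SP.
  rewrite -sum_const_ord; apply: ler_sum => i _.
  apply: (@le_trans _ _ (\sum_j (t - t * (e i j)%:R))).
    rewrite sumrB sum_const_ord -mulr_sumr mulrC; apply: lerB => //.
    by apply: ler_wpM2l; [exact: ltW | exact: ltW].
  apply: ler_sum => j _; rewrite /p Mprod.
  have : 0 <= \sum_k (e k i)%:R * (e k j)%:R :> R.
    by apply: sumr_ge0 => k _; apply: mulr_ge0; exact: ler0n.
  have : 0 <= (t / 2) ^+ 2 * (i == j)%:R by apply: mulr_ge0; [exact: sqr_ge0| exact: ler0n].
  lra.
pose s := trP^-1.
pose J1 : 'cV[R]_n := const_mx 1.
pose B := s *: (M^T *m M) + (s * t) *: (J1 *m J1^T).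
have BE i j : B i j = s * p i j.
  by rewrite /B gram_entry !mxE mulr1 /p; ring.
exists B; split.
  split.
    have s0 : 0 <= s by rewrite /s invr_ge0 ltW.
    by rewrite /B; apply: psd_gram => //; exact: mulr_ge0 s0 (ltW t0).
  split.
    rewrite /mxtrace; under eq_bigr => i _ do rewrite BE.
    by rewrite -mulr_sumr mulVf // lt0r_neq0.
  move=> i j eij; rewrite BE /p Mprod eij.
  have ij : (i == j) = false.
    by apply/negbTE/eqP => Eij; move: eij; rewrite Eij irr.
  rewrite ij big1; first by rewrite /= mulr1 mulr0 sub0r addr0 addrC subrr mulr0.
  move=> k _; case eki: (e k i); case ekj: (e k j); rewrite /= ?(mulr0, mul0r) //.
  by exfalso; apply: (tf i j k); rewrite eij (sym j k) (sym i k) eki ekj.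
have -> : \sum_i \sum_j B i j = SP / trP.
  rewrite mulrC /SP mulr_sumr; apply: eq_bigr => i _; rewrite mulr_sumr.
  by apply: eq_bigr => j _; rewrite BE.
rewrite ler_pdivlMr //.
apply: le_trans SP_ge.
apply: (@le_trans _ _ (t ^+ 2 / 16 * (n%:R * (t ^+ 2 / 16 + (t / 2) ^+ 2 + t)))).
  by apply: ler_wpM2l => //; apply: mulr_ge0 => //; exact: sqr_ge0.
rewrite -t3 -subr_ge0.
have -> : t ^+ 3 * (t ^+ 3 * t - t * (t ^+ 2 / 16)) -
    t ^+ 2 / 16 * (t ^+ 3 * (t ^+ 2 / 16 + (t / 2) ^+ 2 + t)) =
    t ^+ 6 * (t * (251 / 256) - 1 / 8).
  by field.
apply: mulr_ge0; first exact: exprn_ge0 (ltW t0).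
lra.
Qed.

Theorem mainTheorem14 (R : realType) (n : nat) (e : rel 'I_n) :
  simple_graph e -> triangle_free e -> has_edge e ->
  frac_chromatic R (compl_graph e) >= lovasz_theta R e /\
  lovasz_theta R e >= powR (n%:R : R) (2 / 3) / 16.
Proof.
move=> sg tf [x0 [y0 _]].
have n0 : (0 < n)%N := leq_ltn_trans (leq0n _) (ltn_ord x0).
have := @tfacts R n n0; rewrite /=; set t := _ `^ _; move=> [t1 t3 t2].
have t0 : 0 < t by apply: lt_le_trans t1.
have wit : exists B : 'M[R]_n, theta_feasible e B /\
    powR (n%:R : R) (2 / 3) / 16 <= \sum_i \sum_j B i j.
  rewrite t2; case: (boolP [exists v, t ^+ 2 / 16 <= \sum_j (e v j)%:R]).
    move/existsP => [v hv].
    have hpos : 0 < \sum_j (e v j)%:R :> R.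
      apply: lt_le_trans hv; apply: divr_gt0 => //; exact: exprn_gt0.
    have [B [hB hS]] := witness_a e v tf hpos.
    by exists B; rewrite hS.
  move/existsPn => h; apply: witness_b => // v.
  by rewrite ltNge; exact: h.
pose xs : {ffun {set 'I_n} -> R} := [ffun I : {set 'I_n} => ((#|I| == 1)%N)%:R].
have ind1 (a : 'I_n) : independent (compl_graph e) [set a].
  apply/forall_inP => u /set1P -> ; apply/forall_inP => w /set1P ->.
  by rewrite /compl_graph eqxx.
have xsc : frac_colouring (compl_graph e) xs.
  split; first by move=> I; rewrite ffunE ler0n.
  split.
    move=> I hI; rewrite ffunE.
    case E: (_ == _)%N => //; move/cards1P: E => [a Ia].
    by move: hI; rewrite Ia ind1.
  move=> v; rewrite (bigD1 [set v]) /=; last by rewrite ind1 set11.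
  rewrite ffunE cards1 /= lerDl; apply: sumr_ge0 => I _; by rewrite ffunE ler0n.
have ub : forall B : 'M[R]_n, theta_feasible e B ->
    \sum_i \sum_j B i j <= \sum_(I | independent (compl_graph e) I) xs I.
  by move=> B hB; exact: (weak_dual e x0 B xs hB xsc).
split.
  rewrite /frac_chromatic; apply: lb_le_inf.
    by exists (\sum_(I | independent (compl_graph e) I) xs I); exists xs.
  move=> s [x [hx ->]]; apply: ge_sup.
    have [B [hB _]] := wit.
    by exists (\tr (B *m const_mx 1)); exists B.
  by move=> r [B [hB ->]]; rewrite sumJ; exact: (weak_dual e x0 B x hB hx).
have [B [hB hS]] := wit.
apply: le_trans hS _; apply: ub_le_sup.
  exists (\sum_(I | independent (compl_graph e) I) xs I).
  by move=> r [B' [hB' ->]]; rewrite sumJ; exact: ub.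
by exists B; split => //; rewrite sumJ.
Qed.
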